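(* Let $M\ge2$ be an integer and $k\ge2$ real. Suppose $0\le x_1\le\dots\le x_M$ and $\lambda_1,\dots,\lambda_M\ge0$ with $\sum_{i=1}^M\lambda_i=1$. Then $$\sum_{i=1}^M\lambda_ix_i^k-\Big(\sum_{i=1}^M\lambda_ix_i\Big)^k\le\frac18k(k-1)\,x_M^{k-2}(x_M-x_1)^2.$$ *)

(* Defs.v *)
From mathcomp Require Import all_boot all_order all_algebra.
From mathcomp Require Import all_classical all_reals all_analysis.

(* Main.v *)
Require Import Defs.
From mathcomp Require Import all_boot all_order all_algebra.
From mathcomp Require Import all_classical all_reals all_analysis.
From mathcomp Require Import ring lra zify.
Import Order.TTheory GRing.Theory Num.Theory.
Local Open Scope ring_scope.
Local Open Scope classical_set_scope.

Lemma L1 (R : realType) (p b u v : R) : 1 <= p -> 0 < u -> u <= v -> v <= b ->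
  v `^ p - u `^ p <= p * b `^ (p - 1) * (v - u).
Proof.
move=> p1 u0 uv vb.
have hd : forall c : R, 0 < c -> is_derive c 1 (fun x : R => x `^ p) (p * c `^ (p - 1)).
  by move=> c c0; exact: (is_derive1_powR p c0).
have hd' : forall c : R, c \in `]u, v[%R -> is_derive c 1 (fun x : R => x `^ p) (p * c `^ (p - 1)).
  move=> c; rewrite in_itv/= => /andP[uc _]; apply: hd; exact: lt_trans uc.
have hcz : {in `[u, v]%R, forall z, derivable (fun x : R => x `^ p) z 1}.
  move=> z; rewrite in_itv/= => /andP[uz _].
  by case: (hd z (lt_le_trans u0 uz)).
have [c] := MVT_segment uv hd' (derivable_within_continuous hcz).
rewrite in_itv/= => /andP[uc cv] ->.
apply: ler_wpM2r; first by rewrite subr_ge0.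
apply: ler_wpM2l; first by lra.
apply: ge0_ler_powR; rewrite ?nnegrE; try lra.
Qed.

Lemma L2 (R : realType) (k b m x : R) : 2 <= k -> 0 < m -> 0 < x -> m <= b -> x <= b ->
  x `^ k <= m `^ k + k * m `^ (k - 1) * (x - m) + k * (k - 1) * b `^ (k - 2) / 2 * (x - m) ^+ 2.
Proof.
move=> k2 m0 x0 mb xb.
set K := k * m `^ (k - 1).
set D := k * (k - 1) * b `^ (k - 2) / 2.
pose g := (K \*: (@id R) + D \*: ((@id R) - cst m) ^+ 2) - (fun s : R => s `^ k).
have gE : forall s, g s = K * s + D * (s - m) ^+ 2 - s `^ k.
  move=> s; rewrite /g /=. reflexivity.
pose g' := fun s : R => K + D * (2 * (s - m)) - k * s `^ (k - 1).
have hg : forall s : R, 0 < s -> is_derive s 1 g (g' s).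
  move=> s s0.
  have h := is_deriveB (is_deriveD (is_deriveZ K (@is_derive_id _ _ s 1))
     (is_deriveZ D (is_deriveX 2 (is_deriveB (@is_derive_id _ _ s 1) (@is_derive_cst _ _ _ m s 1)))))
     (is_derive1_powR k s0).
  apply: (is_derive_eq h).
  rewrite /g' /= expr1 subr0; congr (_ + _ - _); first exact: mulr1. by congr (_ * _); exact: mulr1.
have L1k : forall u v : R, 0 < u -> u <= v -> v <= b ->
    k * v `^ (k - 1) - k * u `^ (k - 1) <= 2 * D * (v - u).
  move=> u v u0 uv vb.
  have k1 : 1 <= k - 1 by lra.
  have h := @L1 R (k - 1) b u v k1 u0 uv vb.
  rewrite (_ : k - 1 - 1 = k - 2) in h; last by ring.
  have k0 : 0 <= k by lra.
  have := ler_wpM2l k0 h.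
  have -> : 2 * D * (v - u) = k * ((k - 1) * b `^ (k - 2) * (v - u)) by rewrite /D; field.
  by rewrite mulrBr.
have hd : forall lo hi : R, 0 < lo -> forall z, z \in `]lo, hi[%R -> is_derive z 1 g (g' z).
  move=> lo hi lo0 z; rewrite in_itv/= => /andP[lz _]; apply: hg; exact: lt_trans lz.
have hc : forall lo hi : R, 0 < lo -> {in `[lo, hi]%R, forall z, derivable g z 1}.
  move=> lo hi lo0 z; rewrite in_itv/= => /andP[lz _].
  by case: (hg z (lt_le_trans lo0 lz)).
have [xm|mx|<-] := ltgtP x m.
- have [c] := MVT xm (hd x m x0) (derivable_within_continuous (hc x m x0)).
  rewrite in_itv/= => /andP[xc cm]; rewrite !gE => e.
  have := L1k c m (lt_trans x0 xc) (ltW cm) mb.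
  rewrite /g' in e.
  rewrite subrr expr0n /= mulr0 in e.
  move=> H; have Hg : K + D * (2 * (c - m)) - k * c `^ (k - 1) <= 0 by rewrite /K; lra.
  have := mulr_le0_ge0 Hg (ltW ((eqbRL (subr_gt0 _ _) xm))) ; rewrite -e => H2.
  lra.
- have [c] := MVT mx (hd m x m0) (derivable_within_continuous (hc m x m0)).
  rewrite in_itv/= => /andP[mc cx]; rewrite !gE => e.
  have := L1k m c m0 (ltW mc) (le_trans (ltW cx) xb).
  rewrite /g' in e.
  rewrite subrr expr0n /= mulr0 in e.
  move=> H; have Hg : 0 <= K + D * (2 * (c - m)) - k * c `^ (k - 1) by rewrite /K; lra.
  have := mulr_ge0 Hg (ltW ((eqbRL (subr_gt0 _ _) mx))) ; rewrite -e => H2.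
  lra.
- by rewrite subrr expr0n /= !mulr0 !addr0.
Qed.

Lemma powR_split (R : realType) (k y : R) (r s : R) : 2 <= k -> r + s = k ->
  y `^ k = y `^ r * y `^ s.
Proof.
move=> k2 e; rewrite -e powRD //; apply/implyP => /eqP h; exfalso; lra.
Qed.

Lemma L3 (R : realType) (k b m x : R) : 2 <= k -> 0 <= m -> 0 <= x -> m <= b -> x <= b ->
  x `^ k <= m `^ k + k * m `^ (k - 1) * (x - m) + k * (k - 1) * b `^ (k - 2) / 2 * (x - m) ^+ 2.
Proof.
move=> k2 m0 x0 mb xb.
have b0 : 0 <= b by lra.
have kn0 : k != 0 by apply/eqP => h; lra.
have k1n0 : k - 1 != 0 by apply/eqP => h; lra.
have Bm : m `^ (k - 2) <= b `^ (k - 2).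
  by apply: ge0_ler_powR; rewrite ?nnegrE; lra.
have Bx : x `^ (k - 2) <= b `^ (k - 2).
  by apply: ge0_ler_powR; rewrite ?nnegrE; lra.
have e1 : forall y : R, 0 <= y -> y `^ k = y `^ (k - 1) * y.
  move=> y y0; rewrite (@powR_split R k y (k - 1) 1) ?powRr1 //; ring.
have e2 : forall y : R, 0 <= y -> y `^ k = y `^ (k - 2) * y ^+ 2.
  move=> y y0; rewrite (@powR_split R k y (k - 2) 2) -?powR_mulrn //; ring.
have kk : 0 <= k * (k - 1) by nra.
have [->|xpos] := eqVneq x 0.
  rewrite powR0 // sub0r sqrrN.
  have h1 := ler_wpM2l kk (ler_wpM2r (sqr_ge0 m) Bm).
  have h2 : 0 <= (k - 1) * (k - 2) * m `^ k by apply: mulr_ge0; [nra | exact: powR_ge0].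
  have := e1 m m0; have := e2 m m0.
  set P := m `^ (k - 1); set Q := m `^ (k - 2); set B := b `^ (k - 2); set Mk := m `^ k.
  move=> E2 E1.
  have -> : k * P * - m = - k * Mk by rewrite E1; ring.
  have -> : k * (k - 1) * B / 2 * m ^+ 2 = (k * (k - 1)) * (B * m ^+ 2) / 2 by ring.
  have E3 : k * (k - 1) * (Q * m ^+ 2) = k * (k - 1) * Mk by rewrite E2.
  have -> : Mk + - k * Mk + k * (k - 1) * (B * m ^+ 2) / 2 =
     ((k - 1) * (k - 2) * Mk) / 2 + (k * (k - 1) * (B * m ^+ 2) - k * (k - 1) * (Q * m ^+ 2)) / 2.
    by rewrite E3; field.
  by apply: addr_ge0; apply: divr_ge0 => //; rewrite subr_ge0.
have x0' : 0 < x by rewrite lt0r xpos.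
have [->|mpos] := eqVneq m 0.
  rewrite !powR0 // subr0 mulr0 mul0r !add0r.
  have h1 := ler_wpM2r (sqr_ge0 x) Bx.
  have h3 : 0 <= b `^ (k - 2) * x ^+ 2 by apply: mulr_ge0; [exact: powR_ge0|exact: sqr_ge0].
  rewrite e2 //.
  have -> : k * (k - 1) * b `^ (k - 2) / 2 * x ^+ 2 = (k * (k - 1) / 2) * (b `^ (k - 2) * x ^+ 2) by ring.
  set Y := b `^ (k - 2) * x ^+ 2.
  have : 1 <= k * (k - 1) / 2 by nra.
  move=> hk; apply: (le_trans h1); rewrite -/Y -[X in X <= _]mul1r; exact: ler_wpM2r.
have m0' : 0 < m by rewrite lt0r mpos.
exact: L2.
Qed.

Theorem lemma4p3 (R : realType) (M : nat) (k : R) (x lam : nat -> R) :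
  (2 <= M)%N -> 2 <= k ->
  0 <= x 0%N ->
  (forall i, (i.+1 < M)%N -> x i <= x i.+1) ->
  (forall i, (i < M)%N -> 0 <= lam i) ->
  \sum_(i < M) lam i = 1 ->
  \sum_(i < M) lam i * (x i `^ k) - (\sum_(i < M) lam i * x i) `^ k
    <= 8^-1 * k * (k - 1) * (x M.-1 `^ (k - 2)) * (x M.-1 - x 0%N) ^+ 2.
Proof.
move=> M2 k2 a0 xinc lam0 lam1.
have mono : forall i j, (i <= j)%N -> (j < M)%N -> x i <= x j.
  move=> i j; elim: j => [|j IH]; first by rewrite leqn0 => /eqP ->.
  rewrite leq_eqVlt => /orP[/eqP -> //|ij] jM.
  apply: le_trans (IH ij (ltnW jM)) (xinc j jM).
set a := x 0%N; set b := x M.-1.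
have xab : forall i, (i < M)%N -> a <= x i /\ x i <= b.
  move=> i iM; split; apply: mono => //; lia.
set m := \sum_(i < M) lam i * x i.
have ma : a <= m.
  rewrite -[a]mul1r -lam1 mulr_suml; apply: ler_sum => i _.
  by apply: ler_wpM2l; [exact: lam0 | case: (xab i (ltn_ord i))].
have mb : m <= b.
  rewrite -[b]mul1r -lam1 mulr_suml; apply: ler_sum => i _.
  by apply: ler_wpM2l; [exact: lam0 | case: (xab i (ltn_ord i))].
set K := k * m `^ (k - 1).
set D := k * (k - 1) * b `^ (k - 2) / 2.
set mk := m `^ k.
have S1 : \sum_(i < M) lam i * x i `^ k <=
    \sum_(i < M) lam i * (mk + K * (x i - m) + D * (x i - m) ^+ 2).
  apply: ler_sum => i _; apply: ler_wpM2l; first exact: lam0.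
  case: (xab i (ltn_ord i)) => h1 h2.
  apply: L3 => //; [exact: le_trans a0 ma | exact: le_trans a0 h1].
have S2 : \sum_(i < M) lam i * (mk + K * (x i - m) + D * (x i - m) ^+ 2)
    + D * \sum_(i < M) lam i * ((x i - a) * (b - x i)) = mk + D * ((m - a) * (b - m)).
  rewrite mulr_sumr -big_split /=.
  transitivity (\sum_(i < M) ((mk - K * m + D * (m ^+ 2 - a * b)) * lam i
                              + (K + D * (a + b - 2 * m)) * (lam i * x i))).
    by apply: eq_bigr => i _; ring.
  rewrite big_split /= -!mulr_sumr lam1 -/m; ring.
have S3 : 0 <= \sum_(i < M) lam i * ((x i - a) * (b - x i)).
  apply: sumr_ge0 => i _; apply: mulr_ge0; first exact: lam0.
  case: (xab i (ltn_ord i)) => h1 h2; apply: mulr_ge0; lra.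
have D0 : 0 <= D.
  rewrite /D; apply: divr_ge0 => //; apply: mulr_ge0; [nra | exact: powR_ge0].
have S4 : D * ((m - a) * (b - m)) <= D * ((b - a) ^+ 2 / 4).
  apply: ler_wpM2l => //; have := sqr_ge0 (a + b - 2 * m); nra.
have -> : 8^-1 * k * (k - 1) * b `^ (k - 2) * (b - a) ^+ 2 = D * ((b - a) ^+ 2 / 4).
  by rewrite /D; field.
have := mulr_ge0 D0 S3.
lra.
Qed.
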